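(* Let $K$ be a quadratic number field with ring of integers $\mathcal{O}_K$. There exists $X\in\mathcal{O}_K$ such that every element of $\mathcal{O}_K$ can be written uniquely as a finite sum $\sum_j\alpha_jX^j$ with $\alpha_j\in\{0,1\}$ (i.e. $X$ is an $\mathbb{S}$-generator of $\mathcal{O}_K$) if and only if $K$ is one of the following, and in each case the indicated element is such a generator: $\mathbb{Q}(\sqrt{-1})$ with $X=-1+\sqrt{-1}$ of $\mathcal{O}_K=\mathbb{Z}[\sqrt{-1}]$; $\mathbb{Q}(\sqrt{-2})$ with $X=\sqrt{-2}$ of $\mathcal{O}_K=\mathbb{Z}[\sqrt{-2}]$; $\mathbb{Q}(\sqrt{-7})$ with $X=\frac12(1+\sqrt{-7})$.
   Context: An $\mathbb{S}$-generator (i.e. $\mathbb{S}[\mu_{1,+}]$-generator, $\mu_1=\{1\}$) of a ring $A$ is an element $X\in A$ such that every element of $A$ is uniquely a finite sum of distinct powers $X^j$, $j\ge0$ (coefficients in $\{0,1\}$). *)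

(* Defs.v *)
From HB Require Import structures.
From mathcomp Require Import all_boot all_order all_algebra.
From mathcomp Require Import finmap.
Set Implicit Arguments. Unset Strict Implicit. Unset Printing Implicit Defensive.
Import Order.TTheory GRing.Theory Num.Theory.
Local Open Scope ring_scope.

(* Quadratic number fields K = Q(sqrt d), d a squarefree integer, d <> 0, 1.
   Every quadratic field arises from exactly one such d. *)
Definition squarefree_int (d : int) : Prop :=
  forall p : nat, prime p -> ~~ ((p * p)%N%:Z %| d)%Z.

Definition quad_disc_param (d : int) : Prop :=
  [/\ d != 0, d != 1 & squarefree_int d].

(* The ring of integers O_K = Z[w], with
     w = sqrt d          if d = 2, 3 mod 4,   so  w^2 = d,
     w = (1 + sqrt d)/2  if d = 1 mod 4,      so  w^2 = w + (d-1)/4.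
   An element a + b w is represented by the pair (a, b). *)
Definition qtrace (d : int) : int := if (d %% 4)%Z == 1 then 1 else 0.
Definition qnorm (d : int) : int :=
  if (d %% 4)%Z == 1 then ((d - 1) %/ 4)%Z else d.

Definition OK := (int * int)%type.

Definition OK_zero : OK := (0, 0).
Definition OK_one : OK := (1, 0).
Definition OK_add (x y : OK) : OK := (x.1 + y.1, x.2 + y.2).
(* (a + b w)(c + e w) = ac + b e n + (a e + b c + b e t) w, where w^2 = t w + n *)
Definition OK_mul (d : int) (x y : OK) : OK :=
  (x.1 * y.1 + x.2 * y.2 * qnorm d,
   x.1 * y.2 + x.2 * y.1 + x.2 * y.2 * qtrace d).
Fixpoint OK_pow (d : int) (x : OK) (n : nat) : OK :=
  if n is m.+1 then OK_mul d x (OK_pow d x m) else OK_one.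

Definition OK_powsum (d : int) (X : OK) (S : {fset nat}) : OK :=
  \big[OK_add/OK_zero]_(j <- S) OK_pow d X j.

Definition S_generator (d : int) (X : OK) : Prop :=
  forall a : OK, exists! S : {fset nat}, OK_powsum d X S = a.

(* Main.v *)
Require Import Defs.
From HB Require Import structures.
From mathcomp Require Import all_boot all_order all_algebra.
From mathcomp Require Import finmap.
From mathcomp Require Import realalg.
From mathcomp Require Import zify ring lra.
Set Implicit Arguments. Unset Strict Implicit. Unset Printing Implicit Defensive.
Import Order.TTheory GRing.Theory Num.Theory.
Local Open Scope fset_scope.
Local Open Scope ring_scope.



Lemma OK_addA : associative OK_add.
Proof. by move=> [a b] [c e] [f g]; rewrite /OK_add /= !addrA. Qed.
Lemma OK_addC : commutative OK_add.
Proof. by move=> [a b] [c e]; rewrite /OK_add /= addrC [e + _]addrC. Qed.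
Lemma OK_add0 : left_id OK_zero OK_add.
Proof. by move=> [a b]; rewrite /OK_add /= !add0r. Qed.
HB.instance Definition _ := Monoid.isComLaw.Build OK OK_zero OK_add OK_addA OK_addC OK_add0.

Section Gen.
Variables (d : int) (X : OK).
Local Notation ps := (OK_powsum d X).
Definition bit (b : bool) : OK := if b then OK_one else OK_zero.
Definition sh (S : {fset nat}) : {fset nat} := [fset (j.-1)%N | j in S & (0 < j)%N]%fset.
Definition ush (b : bool) (T : {fset nat}) : {fset nat} :=
  ((if b then [fset 0%N] else fset0) `|` [fset j.+1 | j in T])%fset.

Lemma OK_mulDr x y z : OK_mul d x (OK_add y z) = OK_add (OK_mul d x y) (OK_mul d x z).
Proof. case: x y z => [a b] [c e] [f g]; rewrite /OK_mul /OK_add /=; congr pair; ring. Qed.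
Lemma OK_mul0r x : OK_mul d x OK_zero = OK_zero.
Proof. case: x => [a b]; rewrite /OK_mul /OK_zero /=; congr pair; ring. Qed.

Lemma ps_succ T : \big[OK_add/OK_zero]_(j <- [fset j.+1 | j in T]) OK_pow d X j
   = OK_mul d X (ps T).
Proof.
rewrite big_imfset /=; last by move=> i j _ _ [].
by rewrite /OK_powsum (big_endo (OK_mul d X)) ?OK_mul0r //; exact: OK_mulDr.
Qed.

Lemma ps_cons b T : ps (ush b T) = OK_add (bit b) (OK_mul d X (ps T)).
Proof.
rewrite /ush; case: b => /=.
  rewrite {1}/OK_powsum big_fsetU1 /=; last by apply/imfsetP => -[x _].
  by rewrite ps_succ.
by rewrite fset0U -ps_succ OK_add0.
Qed.
Lemma mem_sh S k : (k \in sh S) = (k.+1 \in S).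
Proof.
apply/imfsetP/idP => [[j /= /andP[jS j0] ->]|kS]; first by rewrite prednK.
by exists k.+1 => //=; rewrite inE /= kS.
Qed.

Lemma mem_ush_succ b T k : (k.+1 \in ush b T) = (k \in T).
Proof. by rewrite /ush in_fsetU mem_imfset //; [case: b; rewrite ?inE | move=> i j []]. Qed.

Lemma mem_ush0 b T : (0%N \in ush b T) = b.
Proof.
rewrite /ush in_fsetU; case: b; rewrite ?inE //=.
by apply/imfsetP => -[x].
Qed.

Lemma ush_sh S : ush (0%N \in S) (sh S) = S.
Proof. by apply/fsetP => -[|k]; rewrite ?mem_ush0 // mem_ush_succ mem_sh. Qed.

Lemma ush_inj b b' T T' : ush b T = ush b' T' -> b = b' /\ T = T'.
Proof.
move=> e; split; first by rewrite -(mem_ush0 b T) -(mem_ush0 b' T') e.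
apply/fsetP => k. rewrite -(mem_ush_succ b T k) -(mem_ush_succ b' T' k). by rewrite e.
Qed.

Lemma ps0 : ps fset0 = OK_zero.
Proof. by rewrite /OK_powsum big_seq_fset0. Qed.

Lemma ps_ind (Q : OK -> Prop) : Q OK_zero ->
  (forall b c, Q c -> Q (OK_add (bit b) (OK_mul d X c))) -> forall S, Q (ps S).
Proof.
move=> Q0 QS.
suff H : forall n S, (forall j, j \in S -> (j < n)%N) -> Q (ps S).
  move=> S; apply: (H (\sum_(j <- S) j).+1)%N => j jS.
  by rewrite ltnS (bigD1_seq j) //= ?leq_addr // fset_uniq.
elim=> [|n IH] S HS.
  suff -> : S = fset0 by rewrite ps0.
  by apply/fsetP => j; rewrite inE; apply/negbTE/negP => /HS.
rewrite -(ush_sh S) ps_cons; apply: QS; apply: IH => j.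
by rewrite mem_sh => /HS.
Qed.

Definition digit_inj := forall b b' c c',
  OK_add (bit b) (OK_mul d X c) = OK_add (bit b') (OK_mul d X c') -> b = b' /\ c = c'.

Lemma ps_inj : digit_inj -> forall S T, ps S = ps T -> S = T.
Proof.
move=> DI.
suff H : forall n S T, (forall j, j \in S -> (j < n)%N) -> (forall j, j \in T -> (j < n)%N) ->
   ps S = ps T -> S = T.
  move=> S T; apply: (H (\sum_(j <- S) j + \sum_(j <- T) j).+1)%N => j jS.
    by rewrite ltnS (bigD1_seq j) //= ?fset_uniq // -addnA leq_addr.
  by rewrite ltnS addnC (bigD1_seq j) //= ?fset_uniq // -addnA leq_addr.
elim=> [|n IH] S T HS HT.
  have E : forall U : {fset nat}, (forall j, j \in U -> (j < 0)%N) -> U = fset0.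
    by move=> U HU; apply/fsetP => j; rewrite inE; apply/negbTE/negP => /HU.
  by rewrite (E S HS) (E T HT).
rewrite -(ush_sh S) -(ush_sh T) !ps_cons => /DI [-> e]; congr ush.
by apply: IH e => j; rewrite mem_sh; [move/HS | move/HT].
Qed.

Fixpoint fset_of (bs : seq bool) : {fset nat} :=
  if bs is b :: bs' then ush b (fset_of bs') else fset0.
Fixpoint lps (bs : seq bool) : OK :=
  if bs is b :: bs' then OK_add (bit b) (OK_mul d X (lps bs')) else OK_zero.
Lemma ps_fset_of bs : ps (fset_of bs) = lps bs.
Proof. by elim: bs => [|b bs IH] /=; rewrite ?ps0 // ps_cons IH. Qed.

Lemma S_gen_of : digit_inj -> (forall a, exists bs, lps bs = a) -> S_generator d X.
Proof.
move=> DI EX a; have [bs e] := EX a; exists (fset_of bs); split.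
  by rewrite ps_fset_of.
by move=> S eS; apply: ps_inj => //; rewrite eS ps_fset_of.
Qed.
End Gen.


Fixpoint bits_of (L m : nat) : seq bool :=
  if L is L'.+1 then odd m :: bits_of L' m./2 else [::].
Definition find_rep d X (a : OK) : seq bool :=
  nth [::] [seq bs <- [seq bits_of 8 m | m <- iota 0 256] | lps d X bs == a] 0.

Ltac box a1 a2 :=
  let H1 := fresh in let H2 := fresh in
  assert (H1 : a1 = -2 \/ a1 = -1 \/ a1 = 0 \/ a1 = 1 \/ a1 = 2) by lia;
  assert (H2 : a2 = -2 \/ a2 = -1 \/ a2 = 0 \/ a2 = 1 \/ a2 = 2) by lia;
  destruct H1 as [ -> | [ -> | [ -> | [ -> | -> ] ] ] ]; destruct H2 as [ -> | [ -> | [ -> | [ -> | -> ] ] ] ];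
  match goal with |- exists bs, lps ?d ?X bs = ?a =>
    exists (find_rep d X a); vm_compute; reflexivity end.

Lemma qn_m1 : qnorm (-1) = -1. Proof. by vm_compute. Qed.
Lemma qt_m1 : qtrace (-1) = 0. Proof. by vm_compute. Qed.

Lemma gen_m1 : S_generator (-1) (-1, 1).
Proof.
apply: S_gen_of.
  move=> b b' [c1 c2] [e1 e2]; rewrite /OK_add /OK_mul /bit qn_m1 qt_m1 /=.
  by case: b; case: b' => /= -[E1 E2]; (split; [done| congr pair; lia]) || (exfalso; lia).
suff H : forall n (a : OK), a.1 * a.1 + a.2 * a.2 < n%:Z -> exists bs, lps (-1) (-1, 1) bs = a.
  move=> a; apply: (H (absz (a.1 * a.1 + a.2 * a.2)).+1); case: a => a1 a2 /=; nia.
elim=> [|n IH] [a1 a2] /= Hn; first nia.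
have [Hs|Hb] := lerP (a1 * a1 + a2 * a2) 5.
  have Ha1 : -2 <= a1 <= 2 by nia.
  have Ha2 : -2 <= a2 <= 2 by nia.
  box a1 a2.
have [k Hk] : exists k, a1 + a2 = 2 * k \/ a1 + a2 = 2 * k + 1.
  by exists ((a1 + a2) %/ 2)%Z; lia.
case: Hk => Hk.
  have [bs Hbs] : exists bs, lps (-1) (-1, 1) bs = (k - a1, - k).
    apply: IH => /=. nia.
  exists (false :: bs); rewrite /= Hbs /OK_add /OK_mul /bit qn_m1 qt_m1 /=.
  congr pair; lia.
have [bs Hbs] := IH (k - (a1 - 1), - k) ltac:(simpl; nia).
exists (true :: bs); rewrite /= Hbs /OK_add /OK_mul /bit qn_m1 qt_m1 /=.
congr pair; lia.
Qed.

Lemma qn_m2 : qnorm (-2) = -2. Proof. by vm_compute. Qed.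
Lemma qt_m2 : qtrace (-2) = 0. Proof. by vm_compute. Qed.
Lemma qn_m7 : qnorm (-7) = -2. Proof. by vm_compute. Qed.
Lemma qt_m7 : qtrace (-7) = 1. Proof. by vm_compute. Qed.

Lemma gen_m2 : S_generator (-2) (0, 1).
Proof.
apply: S_gen_of.
  move=> b b' [c1 c2] [e1 e2]; rewrite /OK_add /OK_mul /bit qn_m2 qt_m2 /=.
  by case: b; case: b' => /= -[E1 E2]; (split; [done| congr pair; lia]) || (exfalso; lia).
suff H : forall n (a : OK), a.1 * a.1 + 2 * (a.2 * a.2) < n%:Z -> exists bs, lps (-2) (0, 1) bs = a.
  move=> a; apply: (H (absz (a.1 * a.1 + 2 * (a.2 * a.2))).+1); case: a => a1 a2 /=; nia.
elim=> [|n IH] [a1 a2] /= Hn; first nia.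
have [Hs|Hb] := lerP (a1 * a1 + 2 * (a2 * a2)) 5.
  have Ha1 : -2 <= a1 <= 2 by nia.
  have Ha2 : -2 <= a2 <= 2 by nia.
  box a1 a2.
have [k Hk] : exists k, a1 = 2 * k \/ a1 = 2 * k + 1.
  by exists (a1 %/ 2)%Z; lia.
case: Hk => Hk.
  have [bs Hbs] : exists bs, lps (-2) (0, 1) bs = (a2, - k).
    apply: IH => /=. nia.
  exists (false :: bs); rewrite /= Hbs /OK_add /OK_mul /bit qn_m2 qt_m2 /=.
  congr pair; lia.
have [bs Hbs] : exists bs, lps (-2) (0, 1) bs = (a2, - k).
  apply: IH => /=. nia.
exists (true :: bs); rewrite /= Hbs /OK_add /OK_mul /bit qn_m2 qt_m2 /=.
congr pair; lia.
Qed.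

Lemma gen_m7 : S_generator (-7) (0, 1).
Proof.
apply: S_gen_of.
  move=> b b' [c1 c2] [e1 e2]; rewrite /OK_add /OK_mul /bit qn_m7 qt_m7 /=.
  by case: b; case: b' => /= -[E1 E2]; (split; [done| congr pair; lia]) || (exfalso; lia).
suff H : forall n (a : OK), a.1 * a.1 + a.1 * a.2 + 2 * (a.2 * a.2) < n%:Z -> exists bs, lps (-7) (0, 1) bs = a.
  move=> a; apply: (H (absz (a.1 * a.1 + a.1 * a.2 + 2 * (a.2 * a.2))).+1); case: a => a1 a2 /=; nia.
elim=> [|n IH] [a1 a2] /= Hn; first nia.
have [Hs|Hb] := lerP (a1 * a1 + a1 * a2 + 2 * (a2 * a2)) 5.
  have Ha1 : -2 <= a1 <= 2 by nia.
  have Ha2 : -2 <= a2 <= 2 by nia.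
  box a1 a2.
have [k Hk] : exists k, a1 = 2 * k \/ a1 = 2 * k + 1.
  by exists (a1 %/ 2)%Z; lia.
case: Hk => Hk.
  have [bs Hbs] : exists bs, lps (-7) (0, 1) bs = (a2 + k, - k).
    apply: IH => /=. nia.
  exists (false :: bs); rewrite /= Hbs /OK_add /OK_mul /bit qn_m7 qt_m7 /=.
  congr pair; lia.
have [bs Hbs] : exists bs, lps (-7) (0, 1) bs = (a2 + k, - k).
  apply: IH => /=. nia.
exists (true :: bs); rewrite /= Hbs /OK_add /OK_mul /bit qn_m7 qt_m7 /=.
congr pair; lia.
Qed.


Definition Nm d (x : OK) : int :=
  x.1 * x.1 + qtrace d * x.1 * x.2 - qnorm d * x.2 * x.2.
Definition cj d (x : OK) : OK := (x.1 + qtrace d * x.2, - x.2).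
Definition sc (k : int) (x : OK) : OK := (k * x.1, k * x.2).

Lemma div4 (a b : int) : a * b = 4 -> a * a <> 1 ->
  a = 2 \/ a = -2 \/ (a = 4 /\ b = 1) \/ (a = -4 /\ b = -1).
Proof.
move=> h h1.
have : b <= -1 \/ 1 <= b by case: (ltrgtP b 0) => hb; [lia|lia|move: h; rewrite hb mulr0].
case=> hb.
  have : -4 <= a <= 0 by nia.
  case/andP => ha1 ha2.
  have : a = -4 \/ a = -3 \/ a = -2 \/ a = -1 \/ a = 0 by lia.
  by move=> H; move: h h1; case: H => [->|[->|[->|[->|->]]]]; lia.
have : 0 <= a <= 4 by nia.
case/andP => ha1 ha2.
have : a = 4 \/ a = 3 \/ a = 2 \/ a = 1 \/ a = 0 by lia.
by move=> H; move: h h1; case: H => [->|[->|[->|[->|->]]]]; lia.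
Qed.

Section Alg.
Variable d : int.
Lemma Nm_mul x y : Nm d (OK_mul d x y) = Nm d x * Nm d y.
Proof. case: x y => [a b] [c e]; rewrite /Nm /OK_mul /=; ring. Qed.
Lemma mul_cj x : OK_mul d x (cj d x) = (Nm d x, 0).
Proof. case: x => [a b]; rewrite /Nm /OK_mul /cj /=; congr pair; ring. Qed.
Lemma mul_sc k x y : OK_mul d x (sc k y) = sc k (OK_mul d x y).
Proof. case: x y => [a b] [c e]; rewrite /sc /OK_mul /=; congr pair; ring. Qed.
Lemma OK_mulA x y z : OK_mul d x (OK_mul d y z) = OK_mul d (OK_mul d x y) z.
Proof. case: x y z => [a b] [c e] [f g]; rewrite /OK_mul /=; congr pair; ring. Qed.
Lemma OK_mul1 x : OK_mul d x OK_one = x.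
Proof. case: x => [a b]; rewrite /OK_mul /OK_one /=; congr pair; ring. Qed.
Lemma unit_of x : Nm d x * Nm d x = 1 -> OK_mul d x (sc (Nm d x) (cj d x)) = OK_one.
Proof. by move=> h; rewrite mul_sc mul_cj /sc /OK_one /= mulr0 h. Qed.
End Alg.

Section Conv.
Variables (d : int) (X : OK).
Hypothesis SG : S_generator d X.
Local Notation ps := (OK_powsum d X).

Lemma rep a : exists S, ps S = a.
Proof. by have [S [HS _]] := SG a; exists S. Qed.

Lemma uniq_ps S T : ps S = ps T -> S = T.
Proof.
move=> e; have [S0 [_ U]] := SG (ps S).
by rewrite -(U S erefl) -(U T (esym e)).
Qed.

Lemma D1 a : exists b c, a = OK_add (bit b) (OK_mul d X c).
Proof.
have [S HS] := rep a; exists (0%N \in S), (ps (sh S)).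
by rewrite -ps_cons ush_sh.
Qed.

Lemma nounit Y : OK_mul d X Y <> OK_one.
Proof.
move=> e; have [T HT] := rep Y.
have e1 : ps (ush false T) = OK_one by rewrite ps_cons HT /= OK_add0.
have e2 : ps (ush true fset0) = OK_one.
  by rewrite ps_cons ps0 OK_mul0r /= OK_addC OK_add0.
have := uniq_ps (etrans e1 (esym e2)).
by move/ush_inj => [].
Qed.

Lemma normX2 : Nm d X = 2 \/ Nm d X = -2.
Proof.
have [b [c Hc]] := D1 (2, 0).
have Xc2 : OK_mul d X c = (2, 0).
  move: Hc; case E: (OK_mul d X c) => [z1 z2]; case: b; rewrite /OK_add /bit /=.
    move=> [h1 h2]; have := @nounit c; rewrite E /OK_one => H; exfalso; apply: H. congr pair; lia.
  move=> [h1 h2]; congr pair; lia.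
have Hn : Nm d X * Nm d c = 4 by rewrite -Nm_mul Xc2 /Nm /=; ring.
have N1 : Nm d X * Nm d X <> 1 by move/unit_of; apply: nounit.
have cnu : Nm d c * Nm d c <> 1.
  move/(unit_of (d := d)) => cu.
  set c' := sc (Nm d c) (cj d c) in cu.
  have eX : X = OK_mul d (2, 0) c'.
    by rewrite -Xc2 -OK_mulA cu OK_mul1.
  have [b' [c'' Hc'']] := D1 (0, 1).
  move: Hc''; rewrite eX; clear eX cu; clearbody c'; case: c' => u v; case: c'' => p q.
  rewrite /OK_add /OK_mul /bit; case: b' => /= -[_ h].
    have : 1 = 2 * (u * q + v * p + v * q * qtrace d) by apply: (etrans h); ring.
    lia.
  have : 1 = 2 * (u * q + v * p + v * q * qtrace d) by apply: (etrans h); ring.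
  lia.
have [|[|[[hX hc]|[hX hc]]]] := div4 Hn N1; [by left|by right| |];
  by exfalso; apply: cnu; rewrite hc.
Qed.
End Conv.


Section Real.
Local Notation R := realalg.
Variables (d : int) (X : OK).
Hypothesis SG : S_generator d X.
Local Notation ps := (OK_powsum d X).
Definition sg (w : R) (x : OK) : R := x.1%:~R + x.2%:~R * w.
Definition isroot (w : R) := w * w = (qtrace d)%:~R * w + (qnorm d)%:~R.

Lemma by_root w (A B k : R) : isroot w ->
  A - B = k * (w * w - ((qtrace d)%:~R * w + (qnorm d)%:~R)) -> A = B.
Proof. by move=> hw e; apply/eqP; rewrite -subr_eq0 e hw subrr mulr0. Qed.

Lemma sg_add w x y : sg w (OK_add x y) = sg w x + sg w y.
Proof. by case: x y => [a b] [c e]; rewrite /sg /OK_add /=; ring. Qed.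

Lemma sg_mul w x y : isroot w -> sg w (OK_mul d x y) = sg w x * sg w y.
Proof.
case: x y => [a b] [c e] hw; apply: (@by_root w _ _ (- (b%:~R * e%:~R))) => //.
rewrite /sg /OK_mul /=; ring.
Qed.

Lemma sg_bit w b : sg w (bit b) = b%:R.
Proof. by case: b; rewrite /sg /=; ring. Qed.

Lemma sg_zero w : sg w OK_zero = 0.
Proof. by rewrite /sg /=; ring. Qed.

Lemma pos_contra w : isroot w -> 0 <= sg w X -> False.
Proof.
move=> hw hr; have [S HS] := rep SG (-1, 0).
have : 0 <= sg w (ps S).
  apply: (ps_ind (Q := fun a => 0 <= sg w a)); first by rewrite sg_zero.
  move=> b c hc; rewrite sg_add sg_mul // sg_bit; case: b => /=; nra.
rewrite HS /sg /=.
have -> : ((-1 : int)%:~R : R) = -1 by rewrite rmorphN rmorph1.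
lra.
Qed.

Lemma small_contra w : isroot w -> -2 < 3 * sg w X < 2 -> False.
Proof.
move=> hw hr; have [S HS] := rep SG (3, 0).
have : -3 < sg w (ps S) < 3.
  apply: (ps_ind (Q := fun a => -3 < sg w a < 3)); first by rewrite sg_zero; lra.
  move=> b c hc; rewrite sg_add sg_mul // sg_bit; case: b => /=; nra.
rewrite HS /sg /=.
have -> : ((3 : int)%:~R : R) = 3 by [].
lra.
Qed.

Lemma int_le_of (T : int) (c : int) : (T%:~R : R) < c%:~R + 1 -> T <= c.
Proof. by rewrite -[1]/(1%:~R) -rmorphD ltr_int; lia. Qed.
Lemma int_ge_of (T : int) (c : int) : (c%:~R : R) - 1 < T%:~R -> c <= T.
Proof. by rewrite -[1]/(1%:~R) -rmorphB ltr_int; lia. Qed.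

Lemma neg_case w r' (T : int) : isroot w -> -1 < sg w X < 0 -> sg w X * r' = 2 ->
  sg w X + r' = T%:~R -> False.
Proof.
move=> hw hr hp hs.
have hr' : r' < -2 by nra.
have T3 : T <= -3.
  by apply: int_le_of; rewrite -hs rmorphN /=; lra.
have T4 : T <= -4.
  case: (ltrgtP T (-3)) => hT; [lia| lia |].
  exfalso; move: hs; rewrite hT rmorphN /= => hs.
  have e : r' = -3 - sg w X by lra.
  rewrite e in hp.
  have : 0 < (sg w X + 1) * (sg w X + 2) by apply: mulr_gt0; lra.
  nra.
apply: (small_contra hw).
have hs' : r' <= -4 - sg w X by move: T4; rewrite -(ler_int R) rmorphN /= => h4; lra.
have : 0 < (- sg w X) * (- r' - 3) by apply: mulr_gt0; lra.
move=> h; apply/andP; split; lra.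
Qed.

Lemma real_contra : (qtrace d = 0 /\ 2 <= qnorm d) \/ (qtrace d = 1 /\ 1 <= qnorm d) ->
  (Nm d X = 2 \/ Nm d X = -2) -> False.
Proof.
move=> Htn HN.
have Dge : 4 <= qtrace d * qtrace d + 4 * qnorm d by case: Htn => -[-> h]; lia.
pose s : R := Num.sqrt ((qtrace d * qtrace d + 4 * qnorm d)%:~R).
have hs : s * s = (qtrace d)%:~R * (qtrace d)%:~R + 4 * (qnorm d)%:~R.
  rewrite -expr2 sqr_sqrtr; last by rewrite ler0z; lia.
  by rewrite rmorphD !rmorphM /=.
pose w : R := ((qtrace d)%:~R + s) / 2.
have hw : isroot w.
  rewrite /isroot /w.
  have -> : ((qtrace d)%:~R + s) / 2 * (((qtrace d)%:~R + s) / 2) =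
    ((qtrace d)%:~R * (qtrace d)%:~R + 2 * (qtrace d)%:~R * s + s * s) / 4 :> R by field.
  by rewrite hs; field.
pose w' : R := (qtrace d)%:~R - w.
have hw' : isroot w'.
  rewrite /isroot /w'.
  have -> : ((qtrace d)%:~R - w) * ((qtrace d)%:~R - w) =
     (qtrace d)%:~R * (qtrace d)%:~R - 2 * (qtrace d)%:~R * w + w * w :> R by ring.
  by rewrite hw; ring.
have Hrr : sg w X * sg w' X = (Nm d X)%:~R.
  apply: (@by_root w _ _ (- (X.2%:~R * X.2%:~R))) => //.
  by rewrite /sg /w' /Nm; ring.
pose T : int := 2 * X.1 + qtrace d * X.2.
have Hsum : sg w X + sg w' X = T%:~R by rewrite /sg /w' /T; ring.
have HT : T * T - 4 * Nm d X = X.2 * X.2 * (qtrace d * qtrace d + 4 * qnorm d).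
  by rewrite /T /Nm; ring.
have [hr|hr] := lerP 0 (sg w X); first exact: pos_contra hw hr.
have [hr'|hr'] := lerP 0 (sg w' X); first exact: pos_contra hw' hr'.
have HN2 : Nm d X = 2.
  case: HN => // hN; exfalso; move: Hrr; rewrite hN rmorphN /= => Hrr.
  have : 0 < (- sg w X) * (- sg w' X) by apply: mulr_gt0; lra.
  lra.
rewrite HN2 in Hrr HT.
have [h1|h1] := lerP (sg w X) (-1); last first.
  by apply: (neg_case hw _ Hrr Hsum); lra.
have [h2|h2] := lerP (sg w' X) (-1); last first.
  by apply: (neg_case hw' _ _ (r' := sg w X) (T := T)); [lra | rewrite mulrC | rewrite addrC].
have T2 : T <= -2.
  by apply: int_le_of; rewrite -Hsum rmorphN /=; lra.
have T3 : -3 <= T.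
  apply: int_ge_of; rewrite -Hsum rmorphN /=.
  have : 0 <= (- sg w X - 1) * (- sg w' X - 1) by apply: mulr_ge0; lra.
  lra.
have : T = -2 \/ T = -3 by lia.
case=> hT.
  move: Hsum; rewrite hT rmorphN /= => Hsum.
  have e1 : sg w X = -1 by lra.
  have e2 : sg w' X = -1 by lra.
  by move: Hrr; rewrite e1 e2; lra.
move: HT; rewrite hT; nia.
Qed.
End Real.

Lemma sq_small (y : int) : y * y <> 2 /\ y * y <> -2 /\ y * y <> 5.
Proof.
have [hy|hy] := lerP (y * y) 5; last by lia.
have : -2 <= y <= 2 by nia.
case/andP => h1 h2.
have : y = -2 \/ y = -1 \/ y = 0 \/ y = 1 \/ y = 2 by lia.
by case=> [->|[->|[->|[->|->]]]].
Qed.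

Lemma converse d : quad_disc_param d -> (exists X, S_generator d X) ->
  [\/ d = -1, d = -2 | d = -7].
Proof.
case=> d0 d1 _ [X SG].
have HN := normX2 SG.
have Hs := sq_small.
case E: ((d %% 4)%Z == 1).
  have ht : qtrace d = 1 by rewrite /qtrace E.
  have hn : qnorm d = ((d - 1) %/ 4)%Z by rewrite /qnorm E.
  have hd : d = 4 * qnorm d + 1 by move/eqP: E; rewrite hn; lia.
  have [dn|dp] := ltrP d 0; last first.
    exfalso; apply: (real_contra SG) => //; right; split => //; lia.
  move: HN; rewrite /Nm ht; case: X SG => x1 x2 _ /=.
  move: hd; generalize (qnorm d) => n hd HN.
  have x20 : x2 <> 0.
    move=> h; rewrite h in HN; have := Hs x1; lia.
  have nl : n <= -1 by lia.
  have hsq : 0 <= (2 * x1 + x2) * (2 * x1 + x2) by rewrite -expr2 sqr_ge0.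
  have hx : 1 <= x2 * x2 by nia.
  have h8 : (- 4 * n - 1) * (x2 * x2) <= 8 by nia.
  have nb : -2 <= n by nia.
  have : n = -2 \/ n = -1 by lia.
  case=> hn2; first by constructor 3; lia.
  exfalso; rewrite hn2 in HN.
  have : x2 = 1 \/ x2 = -1 by nia.
  case=> hx2; rewrite hx2 in HN; have := Hs (2 * x1 + x2); rewrite hx2; nia.
have ht : qtrace d = 0 by rewrite /qtrace E.
have hn : qnorm d = d by rewrite /qnorm E.
have [dn|dp] := ltrP d 0; last first.
  exfalso; apply: (real_contra SG) => //; left; split => //; lia.
move: HN; rewrite /Nm ht hn; case: X SG => x1 x2 _ /= HN.
have x20 : x2 <> 0.
  move=> h; rewrite h in HN; have := Hs x1; lia.
have : -2 <= d by nia.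
move=> h; have : d = -1 \/ d = -2 by lia.
by case=> h'; [constructor 1 | constructor 2].
Qed.

Local Close Scope fset_scope.

Theorem proposition6p1 :
  (forall d : int, quad_disc_param d ->
     ((exists X : OK, S_generator d X) <-> [\/ d = -1, d = -2 | d = -7]))
  /\ S_generator (-1) (-1, 1)
  /\ S_generator (-2) (0, 1)
  /\ S_generator (-7) (0, 1).
Proof.
split; last by split; [exact: gen_m1 | split; [exact: gen_m2 | exact: gen_m7]].
move=> d hd; split; first exact: converse.
case=> ->; [exists (-1, 1); exact: gen_m1 | exists (0, 1); exact: gen_m2 | exists (0, 1); exact: gen_m7].
Qed.
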